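(* Let $\mu,\nu$ be $\sigma$-finite invariant measures on $S$ and $\gamma,\delta$ invariant kernels on $S$ such that $$\iint\mathbf 1\{(s,t)\in\cdot\}\,\gamma(s,dt)\,\mu(ds)=\iint\mathbf 1\{(s,t)\in\cdot\}\,\delta(t,ds)\,\nu(dt).$$ Let $v,w:S\to[0,\infty]$ be measurable with $0<\mu_sv<\infty$, $0<\mu_sw<\infty$ for all $s$ and $\frac{\mu_bw}{\mu_bv}=\frac{\mu_{b'}w}{\mu_{b'}v}$ for all $b,b'\in O$, and let $m:S\times S\to[0,\infty]$ be measurable and invariant. Then $$\iint\Delta_v(s,t)w(s)m(s,t)\,\gamma(s,dt)\,\mu(ds)=\iint w(t)m(s,t)\,\delta(t,ds)\,\nu(dt),$$ where $\Delta_v(s,t):=\mu_tv/\mu_sv$.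
   Context: $G$ is a locally compact second countable Hausdorff group, $\lambda$ a left Haar measure. $(S,\mathcal S)$ is a Borel space on which $G$ acts measurably and properly (there is a measurable partition $B_1,B_2,\dots$ of $S$ with $\mu_s(B_n)<\infty$ for all $s,n$), $\mu_s$ being the image of $\lambda$ under $g\mapsto gs$. $O\in\mathcal S$ is a fixed system of orbit representatives. A measure $\mu$ on $S$ is invariant if $\mu(g^{-1}B)=\mu(B)$ for all $g,B$; a $\sigma$-finite kernel $\gamma$ on $S$ is invariant if $\gamma(gs,B)=\gamma(s,g^{-1}B)$; $m$ is invariant if $m(gs,gt)=m(s,t)$. *)

(* Defs.v *)
From HB Require Import structures.
From mathcomp Require Import all_boot all_order all_algebra.
From mathcomp Require Import all_classical all_reals all_analysis.
From mathcomp Require Import measurable_realfun.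
Set Implicit Arguments. Unset Strict Implicit. Unset Printing Implicit Defensive.
Import Order.TTheory GRing.Theory Num.Theory.
Local Open Scope classical_set_scope.
Local Open Scope ring_scope.

Notation borel_of G := (g_sigma_algebraType (@open G)).

Definition is_group (G : Type) (mul : G -> G -> G) (inv : G -> G) (e : G) :=
  [/\ forall x y z, mul x (mul y z) = mul (mul x y) z,
      forall x, mul e x = x, forall x, mul x e = x,
      forall x, mul (inv x) x = e & forall x, mul x (inv x) = e].

Definition lcsc_group (G : ptopologicalType) (mul : G -> G -> G) (inv : G -> G)
    (e : G) :=
  is_group mul inv e /\
  [/\ continuous (fun p : G * G => mul p.1 p.2),
      continuous inv,
      hausdorff_space G,
      locally_compact [set: G] & @second_countable G].

(* Left Haar measure: nonzero, left-invariant Borel measure, finite on compact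
   sets (on an LCSC Hausdorff space every such locally finite Borel measure is
   automatically regular, i.e. Radon). *)
Definition left_haar (R : realType) (G : ptopologicalType) (mul : G -> G -> G)
    (lam : set (borel_of G) -> \bar R) :=
  [/\ (forall (g : G) (A : set (borel_of G)), measurable A ->
         lam [set mul g x | x in A] = lam A),
      (forall K : set G, compact K -> (lam K < +oo)%E) &
      (0 < lam setT)%E].

(* (S, 𝒮) is a Borel space: Borel isomorphic to a Borel subset of the reals. *)
Definition borel_space (R : realType) d (S : measurableType d) :=
  exists f : S -> R, [/\ measurable_fun setT f, injective f &
    forall A : set S, measurable A -> measurable (f @` A)].

Definition measurable_action (G : ptopologicalType) (mul : G -> G -> G) (e : G)
    d (S : measurableType d) (act : G -> S -> S) :=
  [/\ forall s, act e s = s,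
      forall g h s, act (mul g h) s = act g (act h s) &
      measurable_fun setT (fun p : borel_of G * S => act p.1 p.2)].

(* mu_s := image of lam under g |-> g s, evaluated on a set / integrated *)
Definition orbit_measure (R : realType) (G : ptopologicalType)
    (lam : set (borel_of G) -> \bar R) d (S : measurableType d)
    (act : G -> S -> S) (s : S) (B : set S) : \bar R :=
  lam (fun g : borel_of G => B (act g s)).

Definition orbit_int (R : realType) (G : ptopologicalType)
    (lam : {measure set (borel_of G) -> \bar R}) d (S : measurableType d)
    (act : G -> S -> S) (s : S) (v : S -> \bar R) : \bar R :=
  (\int[lam]_g v (act g s))%E.

Definition proper_action (R : realType) (G : ptopologicalType)
    (lam : set (borel_of G) -> \bar R) d (S : measurableType d)
    (act : G -> S -> S) :=
  exists B : nat -> set S,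
    [/\ forall n, measurable (B n), trivIset setT B, \bigcup_n B n = setT &
        forall s n, (orbit_measure lam act s (B n) < +oo)%E].

Definition orbit_representatives (G : Type) d (S : measurableType d)
    (act : G -> S -> S) (O : set S) :=
  measurable O /\ forall s : S, exists! b : S, O b /\ exists g, act g s = b.

Definition invariant_measure (R : realType) (G : Type) d (S : measurableType d)
    (act : G -> S -> S) (mu : set S -> \bar R) :=
  forall g (B : set S), measurable B -> mu (act g @^-1` B) = mu B.

Definition sigma_finite_kernel_on (R : realType) d (S : measurableType d)
    (k : R.-ker S ~> S) :=
  exists B : nat -> set S,
    [/\ forall n, measurable (B n), trivIset setT B, \bigcup_n B n = setT &
        forall s n, (k s (B n) < +oo)%E].

Definition invariant_kernel (R : realType) (G : Type) d (S : measurableType d)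
    (act : G -> S -> S) (k : R.-ker S ~> S) :=
  forall g s (B : set S), measurable B -> k (act g s) B = k s (act g @^-1` B).

Definition invariant_fun2 (G : Type) d (S : measurableType d) (T : Type)
    (act : G -> S -> S) (m : S * S -> T) :=
  forall g s t, m (act g s, act g t) = m (s, t).

Definition Delta_v (R : realType) (G : ptopologicalType)
    (lam : {measure set (borel_of G) -> \bar R}) d (S : measurableType d)
    (act : G -> S -> S) (v : S -> \bar R) (s t : S) : \bar R :=
  (fine (orbit_int lam act t v) / fine (orbit_int lam act s v))%:E.

(* Main.v *)
Require Import Defs.
From HB Require Import structures.
From mathcomp Require Import all_boot all_order all_algebra.
From mathcomp Require Import all_classical all_reals all_analysis.
From mathcomp Require Import measurable_realfun.
From mathcomp Require finmap unstable.
Import Order.TTheory GRing.Theory Num.Theory.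
Local Open Scope classical_set_scope.
Local Open Scope ring_scope.

Set Implicit Arguments. Unset Strict Implicit. Unset Printing Implicit Defensive.

Section KM.
Import HBNNSimple.
Local Open Scope ereal_scope.
Context d d' (X : measurableType d) (Y : measurableType d') (R : realType).
Variable (l : R.-ker X ~> Y) (B : nat -> set Y).
Hypotheses (mB : forall n, measurable (B n)) (tB : trivIset setT B)
  (cB : \bigcup_n B n = setT) (fB : forall x n, l x (B n) < +oo).

Lemma km_xsection (A : set (X * Y)) : measurable A ->
  measurable_fun setT (fun x => l x (xsection A x)).
Proof.
move=> mA.
have -> : (fun x => l x (xsection A x)) =
  (fun x => \sum_(n <oo) mrestr (l x) (mB n) (xsection A x)).
  apply/funext => x; rewrite /mrestr.
  have E : xsection A x = \bigcup_(n in setT) (xsection A x `&` B n).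
    by rewrite -setI_bigcupr cB setIT.
  rewrite [in LHS]E measure_bigcup; last 2 first.
  - by move=> i _; apply: measurableI => //; exact: measurable_xsection.
  - exact: trivIset_setIl.
  by apply: eq_eseriesl => i; rewrite in_setT.
apply: ge0_emeasurable_sum => // n _.
have H := @measurable_prod_subset_xsection_kernel _ _ X Y R l (B n) (mB n).
suff Hb : forall x, exists M : R, forall U, measurable U -> mrestr (l x) (mB n) U < M%:E.
  by have [] := H Hb A mA.
move=> x; exists (fine (l x (B n)) + 1)%R => U mU.
rewrite /mrestr; apply: (@le_lt_trans _ _ (l x (B n))).
  by apply: le_measure; rewrite ?inE//; exact: measurableI.
rewrite -(@fineK _ (l x (B n))) ?lte_fin ?ltrDl//.
by rewrite ge0_fin_numE//.
Qed.

Lemma km (F : X * Y -> \bar R) : (forall z, 0 <= F z) -> measurable_fun setT F ->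
  measurable_fun setT (fun x => \int[l x]_y F (x, y)).
Proof.
move=> F0 mF.
pose k_ := nnsfun_approx measurableT mF.
have nd : nondecreasing_seq (k_ : (X * Y -> R)^nat).
  by move=> a b ab; exact/nd_nnsfun_approx.
have cv : forall z, (k_ n z)%:E @[n --> \oo] --> F z.
  by move=> z; exact/cvg_nnsfun_approx.
apply: (measurable_fun_xsection_integral F l k_ nd cv).
move=> n r; apply: km_xsection.
  rewrite -[X in measurable X]setTI; exact: measurable_funP.
Qed.
End KM.

Definition sfw d (T : measurableType d) (R : realType)
  (m : {measure set T -> \bar R}) (h : sigma_finite setT m) : set T -> \bar R := m.
HB.instance Definition _ d T R m h := Measure.on (@sfw d T R m h).
HB.instance Definition _ d T R m h :=
  @Measure_isSigmaFinite.Build d T R (@sfw d T R m h) h.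

Lemma tonelli d1 d2 (T1 : measurableType d1) (T2 : measurableType d2) (R : realType)
  (m1 : {measure set T1 -> \bar R}) (m2 : {measure set T2 -> \bar R})
  (h1 : sigma_finite setT m1) (h2 : sigma_finite setT m2)
  (f : T1 * T2 -> \bar R) : measurable_fun setT f -> (forall z, (0 <= f z)%E) ->
  (\int[m1]_x \int[m2]_y f (x, y) = \int[m2]_y \int[m1]_x f (x, y))%E.
Proof.
move=> mf f0.
exact: (@fubini_tonelli _ _ _ _ _ (sfw h1) (sfw h2) f mf f0).
Qed.

Section NI.
Local Open Scope ereal_scope.
Context d d' (X : measurableType d) (Y : measurableType d') (R : realType).
Variable (m : {measure set X -> \bar R}) (l : R.-ker X ~> Y) (B : nat -> set Y).
Hypotheses (mB : forall n, measurable (B n)) (tB : trivIset setT B)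
  (cB : \bigcup_n B n = setT) (fB : forall x n, l x (B n) < +oo).

Definition NI (F : X * Y -> \bar R) := \int[m]_x \int[l x]_y F (x, y).

Let kmF := km mB tB cB fB.

Lemma NI_add (F1 F2 : X * Y -> \bar R) :
  (forall z, 0 <= F1 z) -> measurable_fun setT F1 ->
  (forall z, 0 <= F2 z) -> measurable_fun setT F2 ->
  NI (fun z => F1 z + F2 z) = NI F1 + NI F2.
Proof.
move=> F10 mF1 F20 mF2; rewrite /NI.
rewrite -(@ge0_integralD _ _ _ m setT measurableT); first last.
- by apply: kmF.
- by move=> x _; apply: integral_ge0.
- by apply: kmF.
- by move=> x _; apply: integral_ge0.
apply: eq_integral => x _; rewrite ge0_integralD//.
- exact: measurable_fun_pair2.
- exact: measurable_fun_pair2.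
Qed.

Lemma NI_sum (I : eqType) (s : seq I) (H : I -> X * Y -> \bar R) :
  (forall i z, i \in s -> 0 <= H i z) ->
  (forall i, measurable_fun setT (H i)) ->
  NI (fun z => \sum_(i <- s) H i z) = \sum_(i <- s) NI (H i).
Proof.
elim: s => [|a s IH] H0 mH.
  rewrite big_nil /NI.
  under eq_integral do under eq_integral do rewrite big_nil.
  by under eq_integral do rewrite integral0; rewrite integral0.
rewrite big_cons -IH -?NI_add//.
- by apply: eq_integral => x _; apply: eq_integral => y _; rewrite big_cons.
- by move=> z; apply: H0; rewrite inE eqxx.
- by move=> z; rewrite big_seq; apply: sume_ge0 => i Hi; apply: H0; rewrite inE Hi orbT.
- exact: emeasurable_sum.
- by move=> i z Hi; apply: H0; rewrite inE Hi orbT.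

Qed.

Lemma NI_scale (c : R) (F : X * Y -> \bar R) : (0 <= c)%R ->
  (forall z, 0 <= F z) -> measurable_fun setT F ->
  NI (fun z => c%:E * F z) = c%:E * NI F.
Proof.
move=> c0 F0 mF; rewrite /NI -ge0_integralZl_EFin//; last 2 first.
- by move=> x _; apply: integral_ge0.
- by apply: kmF.
apply: eq_integral => x _; rewrite ge0_integralZl_EFin//.
exact: measurable_fun_pair2.
Qed.

Lemma NI_lim (g : (X * Y -> \bar R)^nat) :
  (forall n z, 0 <= g n z) -> (forall n, measurable_fun setT (g n)) ->
  (forall z, nondecreasing_seq (g ^~ z)) ->
  NI (fun z => limn (g ^~ z)) = limn (fun n => NI (g n)).
Proof.
move=> g0 mg ndg; rewrite /NI.
have inner x : \int[l x]_y limn (g ^~ (x, y)) =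
    limn (fun n => \int[l x]_y g n (x, y)).
  apply: (monotone_convergence (l x) measurableT (g' := fun n y => g n (x, y))).
  - by move=> n; exact: measurable_fun_pair2.
  - by move=> n y _.
  - by move=> y _; exact: ndg.
under eq_integral do rewrite inner.
apply: (monotone_convergence m measurableT
   (g' := fun n x => \int[l x]_y g n (x, y))).
- by move=> n; apply: kmF.
- by move=> n x _; apply: integral_ge0.
- move=> x _ a b ab; apply: ge0_le_integral => //.
  + exact: measurable_fun_pair2.
  + exact: measurable_fun_pair2.
  + by move=> y _; exact: ndg.
Qed.

End NI.

Module DPart.
Import finmap unstable.

Section SIMPLE.
Local Open Scope ereal_scope.
Import HBNNSimple.
Context d d' d'' (X : measurableType d) (Y : measurableType d') (Z : measurableType d'') (R : realType).
Variable (m : {measure set X -> \bar R}) (l : R.-ker X ~> Y) (B : nat -> set Y).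
Hypotheses (mB : forall n, measurable (B n)) (tB : trivIset setT B)
  (cB : \bigcup_n B n = setT) (fB : forall x n, l x (B n) < +oo).

Lemma NI_simple (f : {nnsfun Z >-> R}) (phi : X * Y -> Z) :
  measurable_fun setT phi ->
  NI m l (fun z => (f (phi z))%:E) = \sum_(r <- fset_set (range f))
     r%:E * NI m l (fun z => (\1_(f @^-1` [set r]) (phi z))%:E).
Proof.
move=> mphi.
have E : (fun z => (f (phi z))%:E) = (fun z => \sum_(r <- fset_set (range f))
    (r * \1_(f @^-1` [set r]) (phi z))%:E).
  apply/funext => z; rewrite fimfunE -fsumEFin//.
  by rewrite fsbig_finite.
have mI r : measurable_fun setT (fun z => (\1_(f @^-1` [set r]) (phi z))%:E).
  by apply/measurable_EFinP; apply: measurableT_comp => //.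
have H0 : forall r z, r \in fset_set (range f) -> 0 <= (r * \1_(f @^-1` [set r]) (phi z))%:E.
  move=> r z; rewrite in_fset_set// => /set_mem[x _ <-].
  by rewrite lee_fin; apply: mulr_ge0 => //; exact: fun_ge0.
have mH : forall r, measurable_fun setT (fun z => (r * \1_(f @^-1` [set r]) (phi z))%:E).
  move=> r; apply/measurable_EFinP; apply: measurable_funM => //.
  by apply/measurable_EFinP; exact: mI.
rewrite E (@NI_sum _ _ _ _ _ m l B mB tB cB fB _ _ _ H0 mH).
rewrite big_seq [RHS]big_seq; apply: eq_bigr => r.
rewrite in_fset_set// => /set_mem[x _ <-].
under [X in NI m l X = _]eq_fun do rewrite EFinM.
by rewrite (@NI_scale _ _ _ _ _ m l B mB tB cB fB) //; exact: fun_ge0.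
Qed.
End SIMPLE.

Section EXT.
Local Open Scope ereal_scope.
Import HBNNSimple.
Context d (S : measurableType d) (R : realType).
Variables (mu nu : {measure set S -> \bar R}) (gam del : R.-ker S ~> S).
Variables (Bg Bd : nat -> set S).
Hypotheses (mBg : forall n, measurable (Bg n)) (tBg : trivIset setT Bg)
  (cBg : \bigcup_n Bg n = setT) (fBg : forall x n, gam x (Bg n) < +oo).
Hypotheses (mBd : forall n, measurable (Bd n)) (tBd : trivIset setT Bd)
  (cBd : \bigcup_n Bd n = setT) (fBd : forall x n, del x (Bd n) < +oo).
Hypothesis H : forall C : set (S * S), measurable C ->
     (\int[mu]_s \int[gam s]_t (\1_C (s, t) : R)%:E
      = \int[nu]_t \int[del t]_s (\1_C (s, t) : R)%:E).

Lemma ext_eq (F : S * S -> \bar R) : (forall z, 0 <= F z) -> measurable_fun setT F ->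
  \int[mu]_s \int[gam s]_t F (s, t) = \int[nu]_t \int[del t]_s F (s, t).
Proof.
move=> F0 mF.
pose k := nnsfun_approx measurableT mF.
have Fl z : F z = limn (fun n => (k n z)%:E).
  by apply/esym/cvg_lim => //; exact: cvg_nnsfun_approx.
have L : \int[mu]_s \int[gam s]_t F (s, t) =
    NI mu gam (fun z => limn (fun n => (k n z)%:E)).
  by rewrite /NI; apply: eq_integral => s _; apply: eq_integral => t _; rewrite Fl.
have Rr : \int[nu]_t \int[del t]_s F (s, t) =
    NI nu del (fun z => limn (fun n => (k n (swap z))%:E)).
  by rewrite /NI; apply: eq_integral => s _; apply: eq_integral => t _; rewrite Fl.
rewrite L Rr (@NI_lim _ _ _ _ _ mu gam Bg mBg tBg cBg fBg) //; last 3 first.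
- by move=> n z; rewrite lee_fin.
- by move=> n; apply/measurable_EFinP.
- by move=> z a b ab; rewrite lee_fin; exact/lefP/nd_nnsfun_approx.
rewrite (@NI_lim _ _ _ _ _ nu del Bd mBd tBd cBd fBd) //; last 3 first.
- by move=> n z; rewrite lee_fin.
- move=> n; apply/measurable_EFinP; apply: measurableT_comp => //.
  exact: measurable_swap.
- by move=> z a b ab; rewrite lee_fin; exact/lefP/nd_nnsfun_approx.
apply: (f_equal (fun u : (\bar R)^nat => limn u)); apply/funext => n.
have E1 := @NI_simple _ _ _ _ _ _ _ mu gam Bg mBg tBg cBg fBg (k n) id (@measurable_id _ _ setT).
have E2 := @NI_simple _ _ _ _ _ _ _ nu del Bd mBd tBd cBd fBd (k n) swap (@measurable_swap _ _ S S).
rewrite /= in E1 E2.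
rewrite E1 E2; apply: eq_bigr => r _; congr (_ * _).
exact: H.
Qed.
End EXT.

End DPart.
Import DPart.

Section Grp.
Context (G : Type) (mul : G -> G -> G) (inv : G -> G) (e : G).
Hypothesis hg : is_group mul inv e.

Lemma grp_invM a b : inv (mul a b) = mul (inv b) (inv a).
Proof.
case: hg => A L1 R1 LV RV.
have: mul (mul a b) (mul (inv b) (inv a)) = e.
  by rewrite -A (A b) RV L1 RV.
move=> h.
by rewrite -[LHS]R1 -h A LV L1.
Qed.

Lemma grp_invK a : inv (inv a) = a.
Proof.
case: hg => A L1 R1 LV RV.
by rewrite -[LHS]R1 -(LV a) A LV L1.
Qed.
End Grp.

Lemma cont_meas (G H : ptopologicalType) (f : G -> H) : continuous f ->
  measurable_fun [set: borel_of G] (f : borel_of G -> borel_of H).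
Proof.
move=> /continuousP cf.
apply: (@measurability _ _ (borel_of G) (borel_of H) setT f (@open H)) => //.
move=> _ [A oA <-]; apply: sub_sigma_algebra.
by rewrite setTI; apply: cf.
Qed.

Lemma cont_mulg (G : ptopologicalType) (mul : G -> G -> G) (g : G) :
  continuous (fun p : G * G => mul p.1 p.2) -> continuous (mul g).
Proof.
move=> cm x.
have := cm (g, x).
move=> h; apply: (cvg_comp (fun y => (g, y))) h.
by apply: cvg_pair; [exact: cvg_cst|exact: cvg_id].
Qed.

Section Haar.
Local Open Scope ereal_scope.
Context (R : realType) (G : ptopologicalType) (mul : G -> G -> G) (inv : G -> G) (e : G).
Hypothesis hg : is_group mul inv e.
Hypothesis cm : continuous (fun p : G * G => mul p.1 p.2).
Variable lam : {measure set (borel_of G) -> \bar R}.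
Hypothesis hL : left_haar mul lam.

Lemma mmul g : measurable_fun [set: borel_of G] (mul g : borel_of G -> borel_of G).
Proof. by apply: cont_meas; apply: cont_mulg. Qed.

Lemma lam_invar (g : G) (f : borel_of G -> \bar R) :
  (forall x, 0 <= f x) -> measurable_fun setT f ->
  \int[lam]_h f (mul g h) = \int[lam]_h f h.
Proof.
move=> f0 mf.
have := @ge0_integral_pushforward _ _ (borel_of G) (borel_of G) R (mul g) (mmul g) lam setT f measurableT mf (fun x _ => f0 x).
have mm := mmul g.
move=> E; rewrite preimage_setT in E; rewrite [LHS](_ : _ = \int[lam]_(x in setT) (f \o mul g) x) // -E //.
apply: eq_measure_integral => // A mA _.
rewrite /pushforward.
case: hL => hinv _ _.
rewrite -(hinv (inv g) A mA); congr (lam _).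
case: hg => As L1 R1 LV RV.
apply/seteqP; split.
- move=> y /= Ay; exists (mul g y) => //.
  by rewrite As LV L1.
- by move=> _ [x Ax <-] /=; rewrite As RV L1.
Qed.
End Haar.

Section Act.
Local Open Scope ereal_scope.
Context (R : realType) (G : ptopologicalType) (mul : G -> G -> G) (e : G)
  (d : measure_display) (S : measurableType d) (act : G -> S -> S).
Hypothesis hA : measurable_action mul e act.

Lemma mact_joint : measurable_fun setT (fun p : borel_of G * S => act p.1 p.2).
Proof. by case: hA. Qed.

Lemma mact_l (s : S) : measurable_fun [set: borel_of G] (fun g : borel_of G => act g s).
Proof.
apply: (measurableT_comp mact_joint (f := fun p : borel_of G * S => act p.1 p.2) (g := fun g : borel_of G => (g, s))).
exact: pair2_measurable.
Qed.

Lemma mact_r (g : G) : measurable_fun [set: S] (act g).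
Proof.
apply: (measurableT_comp mact_joint (f := fun p : borel_of G * S => act p.1 p.2) (g := fun t : S => ((g : borel_of G), t))).
exact: pair1_measurable.
Qed.

Lemma lam_sf (lam : {measure set (borel_of G) -> \bar R}) (s0 : S) :
  proper_action lam act -> sigma_finite setT lam.
Proof.
case=> B [mB tB cB fB].
exists (fun n => (fun g : borel_of G => act g s0) @^-1` B n).
  apply/seteqP; split => // g _.
  have : [set: S] (act g s0) by [].
  by rewrite -cB => -[n _ Bn]; exists n.
move=> n; split; last exact: fB.
by rewrite -[X in measurable X]setTI; apply: mact_l.
Qed.
End Act.

Definition kc d d' (X : measurableType d) (Y : measurableType d') (R : realType)
  (m : {measure set Y -> \bar R}) : X -> {measure set Y -> \bar R} := fun _ => m.
Lemma kc_meas d d' (X : measurableType d) (Y : measurableType d') (R : realType)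
  (m : {measure set Y -> \bar R}) U : measurable U ->
  measurable_fun [set: X] ((@kc d d' X Y R m) ^~ U).
Proof. by move=> _; exact: measurable_cst. Qed.
HB.instance Definition _ d d' X Y R m :=
  @isKernel.Build d d' X Y R (@kc d d' X Y R m) (@kc_meas d d' X Y R m).

Definition kfst d d' d'' (X : measurableType d) (Z : measurableType d'') (Y : measurableType d') (R : realType)
  (k : R.-ker X ~> Y) : X * Z -> {measure set Y -> \bar R} := fun p => k p.1.
Lemma kfst_meas d d' d'' (X : measurableType d) (Z : measurableType d'') (Y : measurableType d') (R : realType)
  (k : R.-ker X ~> Y) U : measurable U ->
  measurable_fun [set: X * Z] ((@kfst d d' d'' X Z Y R k) ^~ U).
Proof.
move=> mU; apply: (measurableT_comp (f := k ^~ U) (g := fst)).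
  exact: measurable_kernel.
exact: measurable_fst.
Qed.
HB.instance Definition _ d d' d'' X Z Y R k :=
  @isKernel.Build _ _ _ Y R (@kfst d d' d'' X Z Y R k) (@kfst_meas d d' d'' X Z Y R k).

Lemma part_sf d (T : measurableType d) (R : realType) (m : {measure set T -> \bar R})
  (B : nat -> set T) : (forall n, measurable (B n)) -> \bigcup_n B n = setT ->
  (forall n, (m (B n) < +oo)%E) -> sigma_finite setT m.
Proof. by move=> mB cB fB; exists B => // n; split. Qed.

Lemma push_eq d d' (X : measurableType d) (Y : measurableType d') (R : realType)
  (m : {measure set X -> \bar R}) (m' : {measure set Y -> \bar R}) (phi : X -> Y) :
  measurable_fun setT phi ->
  (forall A, measurable A -> m (phi @^-1` A) = m' A) ->
  forall f : Y -> \bar R, (forall y, (0 <= f y)%E) -> measurable_fun setT f ->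
  (\int[m']_y f y = \int[m]_x f (phi x))%E.
Proof.
move=> mphi H f f0 mf.
have := @ge0_integral_pushforward _ _ X Y R phi mphi m setT f measurableT mf (fun x _ => f0 x).
rewrite preimage_setT => <-.
apply: eq_measure_integral => // A mA _.
by rewrite /pushforward -H.
Qed.

Ltac side := solve [ move=> *; repeat apply: mule_ge0; auto | by repeat apply: emeasurable_funM ].

Section Orbit.
Local Open Scope ereal_scope.
Context (R : realType) (G : ptopologicalType) (mul : G -> G -> G) (inv : G -> G) (e : G).
Hypothesis hg : is_group mul inv e.
Hypothesis cm : continuous (fun p : G * G => mul p.1 p.2).
Hypothesis ci : continuous inv.
Variable lam : {measure set (borel_of G) -> \bar R}.
Hypothesis hL : left_haar mul lam.
Context (d : measure_display) (S : measurableType d) (act : G -> S -> S).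
Hypothesis hA : measurable_action mul e act.
Variable Bl : nat -> set (borel_of G).
Hypotheses (mBl : forall n, measurable (Bl n)) (tBl : trivIset setT Bl)
  (cBl : \bigcup_n Bl n = setT) (fBl : forall n, lam (Bl n) < +oo).

Let lsf : sigma_finite setT lam := part_sf mBl cBl fBl.

Lemma minv : measurable_fun [set: borel_of G] (inv : borel_of G -> borel_of G).
Proof. exact: cont_meas. Qed.

Lemma mact2 d0 (T : measurableType d0) (f1 : T -> borel_of G) (f2 : T -> S) :
  measurable_fun setT f1 -> measurable_fun setT f2 ->
  measurable_fun setT (fun t => act (f1 t) (f2 t)).
Proof.
move=> m1 m2.
apply: (measurableT_comp (f := fun p : borel_of G * S => act p.1 p.2)
  (g := fun t => (f1 t, f2 t))).
  exact: (mact_joint hA).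
exact: measurable_fun_pair.
Qed.

Lemma act_mul g h s : act (mul g h) s = act g (act h s).
Proof. by case: hA => _ -> _. Qed.

Lemma act_inv g s : act (inv g) (act g s) = s.
Proof. by case: hA => h1 h2 _; rewrite -h2; case: hg => _ _ _ -> _. Qed.

Definition oint (x : S) (a : S -> \bar R) := \int[lam]_g a (act g x).

Lemma oint_meas (a : S -> \bar R) : (forall x, 0 <= a x) -> measurable_fun setT a ->
  measurable_fun setT (fun x => oint x a).
Proof.
move=> a0 ma.
have MF : measurable_fun setT (fun p : S * borel_of G => a (act p.2 p.1)).
  apply: measurableT_comp => //; apply: mact2.
  - exact: measurable_snd.
  - exact: measurable_fst.
have H := (@km _ _ S (borel_of G) R (@kc _ _ S (borel_of G) R lam) Bl mBl tBl cBl (fun _ n => fBl n)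
  (fun p : S * borel_of G => a (act p.2 p.1)) (fun _ => a0 _) MF).
exact: H.
Qed.

Definition Kf (b : S -> \bar R) (x : S) := \int[lam]_g b (act (inv g) x).

Lemma Kf_meas (b : S -> \bar R) : (forall x, 0 <= b x) -> measurable_fun setT b ->
  measurable_fun setT (Kf b).
Proof.
move=> b0 mb.
have MF : measurable_fun setT (fun p : S * borel_of G => b (act (inv p.2) p.1)).
  apply: measurableT_comp => //; apply: mact2.
  - apply: measurableT_comp; first exact: minv. exact: measurable_snd.
  - exact: measurable_fst.
exact: (@km _ _ S (borel_of G) R (@kc _ _ S (borel_of G) R lam) Bl mBl tBl cBl (fun _ n => fBl n)
  (fun p : S * borel_of G => b (act (inv p.2) p.1)) (fun _ => b0 _) MF).
Qed.

Lemma Kf_inv (b : S -> \bar R) g x : (forall x, 0 <= b x) -> measurable_fun setT b ->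
  Kf b (act g x) = Kf b x.
Proof.
move=> b0 mb; rewrite /Kf.
rewrite -(lam_invar hg cm hL (inv g) (f := fun h => b (act (inv h) x))) //; last first.
  apply: measurableT_comp => //; apply: mact2; last exact: measurable_cst.
  exact: minv.
apply: eq_integral => h _.
by rewrite (grp_invM hg) (grp_invK hg) act_mul.
Qed.

Lemma orbitF (a b : S -> \bar R) x :
  (forall x, 0 <= a x) -> measurable_fun setT a ->
  (forall x, 0 <= b x) -> measurable_fun setT b ->
  \int[lam]_h (a (act h x) * Kf b (act h x)) =
  \int[lam]_h (b (act h x) * oint (act h x) a).
Proof.
move=> a0 ma b0 mb.
have mah : measurable_fun [set: borel_of G] (fun h : borel_of G => a (act h x)).
  by apply: measurableT_comp => //; apply: (mact_l hA).
have mbh : measurable_fun [set: borel_of G] (fun h : borel_of G => b (act h x)).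
  by apply: measurableT_comp => //; apply: (mact_l hA).
rewrite /Kf /oint.
transitivity (\int[lam]_h \int[lam]_g (a (act h x) * b (act (inv g) (act h x)))).
  apply: eq_integral => h _; rewrite ge0_integralZl //.
  apply: measurableT_comp => //; apply: mact2; last exact: measurable_cst.
  exact: minv.
rewrite (tonelli lsf lsf (f := fun p : borel_of G * borel_of G => a (act p.1 x) * b (act (inv p.2) (act p.1 x)))); last 2 first.
- apply: emeasurable_funM.
  + apply: measurableT_comp => //; apply: mact2; last exact: measurable_cst.
    exact: measurable_fst.
  + apply: measurableT_comp => //; apply: mact2.
    * apply: measurableT_comp; first exact: minv. exact: measurable_snd.
    * apply: mact2; last exact: measurable_cst. exact: measurable_fst.
- by move=> z; apply: mule_ge0.
transitivity (\int[lam]_g \int[lam]_h (a (act g (act h x)) * b (act h x))).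
  apply: eq_integral => g _.
  rewrite -(lam_invar hg cm hL g (f := fun h => a (act h x) * b (act (inv g) (act h x)))) //; last 2 first.
  - by move=> z; apply: mule_ge0.
  - apply: emeasurable_funM => //.
    apply: measurableT_comp => //; apply: mact2; first exact: measurable_cst.
    exact: (mact_l hA).
  by apply: eq_integral => h _; rewrite !act_mul act_inv.
rewrite -(tonelli lsf lsf (f := fun p : borel_of G * borel_of G => a (act p.2 (act p.1 x)) * b (act p.1 x))); last 2 first.
- apply: emeasurable_funM.
  + apply: measurableT_comp => //; apply: mact2.
    * exact: measurable_snd.
    * apply: mact2; last exact: measurable_cst. exact: measurable_fst.
  + apply: measurableT_comp => //; apply: mact2; last exact: measurable_cst.
    exact: measurable_fst.
- by move=> z; apply: mule_ge0.
apply: eq_integral => h _; rewrite -ge0_integralZl //.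
- by apply: eq_integral => g _; rewrite muleC.
- apply: measurableT_comp => //; apply: mact2; last exact: measurable_cst.
  exact: measurable_id.
Qed.

Definition bf (v w : S -> \bar R) y := w y * ((fine (oint y v))^-1)%:E.

Lemma oint_ge0 y a : (forall x, 0 <= a x) -> 0 <= oint y a.
Proof. by move=> a0; apply: integral_ge0 => g _. Qed.

Lemma bf_meas (v w : S -> \bar R) :
  (forall x, 0 <= v x) -> measurable_fun setT v ->
  measurable_fun setT w -> measurable_fun setT (bf v w).
Proof.
move=> v0 mv mw; apply: emeasurable_funM => //.
apply/measurable_EFinP.
have -> : (fun y => (fine (oint y v))^-1)%R = (fun y => powR (fine (oint y v)) (-1))%R.
  by apply/funext => y; rewrite powR_inv1 //; apply: fine_ge0; exact: oint_ge0.
apply: (measurableT_comp (@measurable_powR R (-1)) (g := fun y => fine (oint y v))).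
apply: (measurableT_comp (@fine_measurable R setT measurableT) (g := fun y => oint y v)).
exact: oint_meas.
Qed.

Lemma bf_ge0 (v w : S -> \bar R) y : (forall x, 0 <= v x) ->
  (forall x, 0 <= w x) -> 0 <= bf v w y.
Proof.
move=> v0 w0; apply: mule_ge0 => //; rewrite lee_fin invr_ge0.
by apply: fine_ge0; exact: oint_ge0.
Qed.

Lemma Kf_val (v w : S -> \bar R) x :
  (forall x, 0 <= v x) -> measurable_fun setT v ->
  (forall x, 0 <= w x) -> measurable_fun setT w ->
  (forall y, 0 < oint y v < +oo) -> oint x w < +oo ->
  Kf (bf v w) x = (fine (oint x w) / fine (oint x v))%:E.
Proof.
move=> v0 mv w0 mw hv hw.
have mb := bf_meas v0 mv mw.
have b0 y : 0 <= bf v w y by exact: bf_ge0.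
have := orbitF x v0 mv b0 mb.
under eq_integral do rewrite Kf_inv //.
rewrite ge0_integralZr //; last 2 first.
- by apply: measurableT_comp => //; apply: (mact_l hA).
- by apply: integral_ge0 => g _.
have E y : bf v w y * oint y v = w y.
  rewrite /bf -muleA.
  have /andP[h1 h2] := hv y.
  rewrite -[X in _ * (_ * X)](@fineK _ (oint y v)); last by rewrite ge0_fin_numE// ltW.
  by rewrite -EFinM mulVf ?mule1 //; apply: lt0r_neq0; exact: fine_gt0.
under [X in _ = X -> _]eq_integral do rewrite E.
rewrite -/(oint x v) -/(oint x w).
have /andP[hv1 hv2] := hv x.
rewrite -(@fineK _ (oint x v)); last by rewrite ge0_fin_numE// ltW.
rewrite -(@fineK _ (oint x w)); last by rewrite ge0_fin_numE// oint_ge0.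
have cpos : (0 < fine (oint x v))%R by exact: fine_gt0.
have Kge0 : 0 <= Kf (bf v w) x by apply: integral_ge0.
move: Kge0; case: (Kf (bf v w) x) => [r _| _ |//].
- rewrite -EFinM => -[h]; congr (_%:E).
  by rewrite -h mulrAC divff ?mul1r //; exact: lt0r_neq0.
- by rewrite mulry gtr0_sg // mul1e.
Qed.

Lemma intZr (f : borel_of G -> \bar R) k : measurable_fun setT f ->
  (forall x, 0 <= f x) -> 0 <= k -> \int[lam]_h (f h * k) = \int[lam]_h f h * k.
Proof. by move=> mf f0 k0; exact: (ge0_integralZr lam measurableT mf (fun x _ => f0 x) k0). Qed.

Lemma intZl (f : borel_of G -> \bar R) k : measurable_fun setT f ->
  (forall x, 0 <= f x) -> 0 <= k -> \int[lam]_h (k * f h) = k * \int[lam]_h f h.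
Proof. by move=> mf f0 k0; exact: (ge0_integralZl lam measurableT mf (fun x _ => f0 x) k0). Qed.

Section Main.
Variables (mu : {measure set S -> \bar R}) (gam : R.-ker S ~> S).
Hypotheses (musf : sigma_finite setT mu) (muinv : invariant_measure act mu)
  (gaminv : invariant_kernel act gam).
Variable Bg : nat -> set S.
Hypotheses (mBg : forall n, measurable (Bg n)) (tBg : trivIset setT Bg)
  (cBg : \bigcup_n Bg n = setT) (fBg : forall x n, gam x (Bg n) < +oo).

Lemma I_inv g (F : S * S -> \bar R) : (forall z, 0 <= F z) -> measurable_fun setT F ->
  \int[mu]_s \int[gam s]_t F (act g s, act g t) = \int[mu]_s \int[gam s]_t F (s, t).
Proof.
move=> F0 mF.
have mg := mact_r hA g.
transitivity (\int[mu]_s \int[gam (act g s)]_t F (act g s, t)).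
  apply: eq_integral => s _.
  rewrite (@push_eq _ _ S S R (gam s) (gam (act g s)) (act g) mg) //.
  - by move=> A mA; rewrite gaminv.
  - by apply: measurableT_comp => //; exact: pair1_measurable.
have mPhi := km mBg tBg cBg fBg F0 mF.
rewrite -(@push_eq _ _ S S R mu mu (act g) mg _ (fun x => \int[gam x]_t F (x, t))) //.
- by move=> A mA; rewrite muinv.
- by move=> x; apply: integral_ge0.
Qed.

Lemma I_lam (F : G -> S -> S -> \bar R) :
  (forall h s t, 0 <= F h s t) ->
  measurable_fun setT (fun p : borel_of G * (S * S) => F p.1 p.2.1 p.2.2) ->
  \int[mu]_s \int[gam s]_t \int[lam]_h F h s t =
  \int[lam]_h \int[mu]_s \int[gam s]_t F h s t.
Proof.
move=> F0 mF.
have gsf s : sigma_finite setT (gam s) := part_sf mBg cBg (fBg s).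
transitivity (\int[mu]_s \int[lam]_h \int[gam s]_t F h s t).
  apply: eq_integral => s _.
  rewrite (tonelli (gsf s) lsf (f := fun p : S * borel_of G => F p.2 s p.1)) //.
  apply: (measurableT_comp mF (g := fun p : S * borel_of G => (p.2, (s, p.1)))).
  apply: measurable_fun_pair; first exact: measurable_snd.
  apply: measurable_fun_pair; first exact: measurable_cst.
  exact: measurable_fst.
rewrite (tonelli musf lsf (f := fun p : S * borel_of G => \int[gam p.1]_t F p.2 p.1 t)) //.
- have := @km _ _ (S * borel_of G)%type S R (@kfst _ _ _ S (borel_of G) S R gam) Bg mBg tBg cBg
    (fun x n => fBg x.1 n) (fun q : (S * borel_of G) * S => F q.1.2 q.1.1 q.2) (fun q => F0 _ _ _).
  apply.
  apply: (measurableT_comp mF (g := fun q : (S * borel_of G) * S => (q.1.2, (q.1.1, q.2)))).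
  apply: measurable_fun_pair.
    by apply: (measurableT_comp (f := snd) (g := fst)); [exact: measurable_snd|exact: measurable_fst].
  apply: measurable_fun_pair; last exact: measurable_snd.
  by apply: (measurableT_comp (f := fst) (g := fst)); exact: measurable_fst.
- by move=> p; apply: integral_ge0.
Qed.

Lemma step (v b : S -> \bar R) (r : S * S -> S) (m : S * S -> \bar R) :
  (forall x, 0 <= v x) -> measurable_fun setT v ->
  (forall x, 0 <= b x) -> measurable_fun setT b ->
  measurable_fun setT r -> (forall h z, r (act h z.1, act h z.2) = act h (r z)) ->
  (forall z, 0 <= m z) -> measurable_fun setT m -> invariant_fun2 act m ->
  \int[mu]_s \int[gam s]_t (oint t v * b (r (s, t)) * m (s, t)) =
  \int[mu]_s \int[gam s]_t (v t * Kf b (r (s, t)) * m (s, t)).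
Proof.
move=> v0 mv b0 mb mr req m0 mm minv2.
have mvt : measurable_fun setT (fun p : borel_of G * (S * S) => v (act p.1 p.2.2)).
  apply: measurableT_comp => //; apply: mact2; first exact: measurable_fst.
  by apply: (measurableT_comp (f := snd) (g := snd)); exact: measurable_snd.
have mbr : measurable_fun setT (fun p : borel_of G * (S * S) => b (r p.2)).
  by apply: measurableT_comp => //; apply: measurableT_comp => //; exact: measurable_snd.
have mmp : measurable_fun setT (fun p : borel_of G * (S * S) => m p.2).
  by apply: measurableT_comp => //; exact: measurable_snd.
have mbinv : measurable_fun setT (fun p : borel_of G * (S * S) => b (act (inv p.1) (r p.2))).
  apply: measurableT_comp => //; apply: mact2.
  - by apply: measurableT_comp; [exact: minv|exact: measurable_fst].
  - by apply: measurableT_comp => //; exact: measurable_snd.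
have mbr' : measurable_fun setT (fun p : borel_of G * (S * S) => b (r (p.2.1, p.2.2))).
  by rewrite (_ : (fun p : borel_of G * (S * S) => _) = (fun p => b (r p.2))) //; apply/funext => -[? [? ?]].
have mmp' : measurable_fun setT (fun p : borel_of G * (S * S) => m (p.2.1, p.2.2)).
  by rewrite (_ : (fun p : borel_of G * (S * S) => _) = (fun p => m p.2)) //; apply/funext => -[? [? ?]].
have mbinv' : measurable_fun setT (fun p : borel_of G * (S * S) => b (act (inv p.1) (r (p.2.1, p.2.2)))).
  by rewrite (_ : (fun p : borel_of G * (S * S) => _) = (fun p => b (act (inv p.1) (r p.2)))) //; apply/funext => -[? [? ?]].
have mvs : measurable_fun setT (fun p : borel_of G * (S * S) => v p.2.2).
  by apply: (measurableT_comp (f := v) (g := fun p : borel_of G * (S * S) => p.2.2)) => //;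
     apply: (measurableT_comp (f := snd) (g := snd)); exact: measurable_snd.
transitivity (\int[mu]_s \int[gam s]_t \int[lam]_h (v (act h t) * b (r (s, t)) * m (s, t))).
  apply: eq_integral => s _; apply: eq_integral => t _.
  have mvh : measurable_fun setT (fun h : borel_of G => v (act h t)).
    by apply: measurableT_comp => //; exact: (mact_l hA).
  rewrite (@intZr (fun h => v (act h t) * b (r (s, t)))) //; last 2 first.
  - exact: emeasurable_funM.
  - by move=> h; apply: mule_ge0.
  by rewrite (@intZr (fun h => v (act h t))) //.
rewrite (I_lam (F := fun h s t => v (act h t) * b (r (s, t)) * m (s, t))); try side.
transitivity (\int[lam]_h \int[mu]_s \int[gam s]_t
    (v t * b (act (inv h) (r (s, t))) * m (s, t))); last first.
  rewrite -(I_lam (F := fun h s t => v t * b (act (inv h) (r (s, t))) * m (s, t))); try side.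
  apply: eq_integral => s _; apply: eq_integral => t _.
  have mbh : measurable_fun setT (fun h : borel_of G => b (act (inv h) (r (s, t)))).
    apply: measurableT_comp => //; apply: mact2; [exact: minv|exact: measurable_cst].
  rewrite (@intZr (fun h => v t * b (act (inv h) (r (s, t))))) //; last 2 first.
  - exact: emeasurable_funM.
  - by move=> h; apply: mule_ge0.
  by rewrite (@intZl (fun h => b (act (inv h) (r (s, t))))) //.
apply: eq_integral => h _.
rewrite -(I_inv h (F := fun z => v z.2 * b (act (inv h) (r z)) * m z)); last 2 first.
- by move=> z; apply: mule_ge0 => //; apply: mule_ge0.
- apply: emeasurable_funM => //; apply: emeasurable_funM => //.
  + by apply: measurableT_comp => //; exact: measurable_snd.
  + apply: measurableT_comp => //; apply: mact2 => //; exact: measurable_cst.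
apply: eq_integral => s _; apply: eq_integral => t _ /=.
by have /= -> := req h (s, t); rewrite act_inv minv2.
Qed.

Variables (nu : {measure set S -> \bar R}) (del : R.-ker S ~> S).
Variable Bd : nat -> set S.
Hypotheses (mBd : forall n, measurable (Bd n)) (tBd : trivIset setT Bd)
  (cBd : \bigcup_n Bd n = setT) (fBd : forall x n, del x (Bd n) < +oo).
Hypothesis HM : forall C : set (S * S), measurable C ->
     (\int[mu]_s \int[gam s]_t (\1_C (s, t) : R)%:E
      = \int[nu]_t \int[del t]_s (\1_C (s, t) : R)%:E).

Lemma main_core (O : set S) (v w : S -> \bar R) (m : S * S -> \bar R) :
  orbit_representatives act O ->
  measurable_fun setT v -> (forall s, 0 <= v s) ->
  measurable_fun setT w -> (forall s, 0 <= w s) ->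
  (forall s, 0 < orbit_int lam act s v < +oo) ->
  (forall s, 0 < orbit_int lam act s w < +oo) ->
  (forall b b', O b -> O b' ->
     (fine (orbit_int lam act b w) / fine (orbit_int lam act b v)
     = fine (orbit_int lam act b' w) / fine (orbit_int lam act b' v))%R) ->
  measurable_fun setT m -> (forall p, 0 <= m p) -> invariant_fun2 act m ->
  \int[mu]_s \int[gam s]_t (Delta_v lam act v s t * w s * m (s, t))
   = \int[nu]_t \int[del t]_s (w t * m (s, t)).
Proof.
move=> hO mv v0 mw w0 hv hw hr mm m0 minv2.
have hv' : forall y, 0 < oint y v < +oo := hv.
have b0 y : 0 <= bf v w y by exact: bf_ge0.
have mb := bf_meas v0 mv mw.
have E y : bf v w y * oint y v = w y.
  rewrite /bf -muleA.
  have /andP[h1 h2] := hv y.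
  rewrite -[X in _ * (_ * X)](@fineK _ (oint y v)); last by rewrite ge0_fin_numE// ltW.
  by rewrite -EFinM mulVf ?mule1 //; apply: lt0r_neq0; exact: fine_gt0.
have KV x : Kf (bf v w) x = (fine (oint x w) / fine (oint x v))%:E.
  by apply: Kf_val => //; have /andP[] := hw x.
have Kc x y : Kf (bf v w) x = Kf (bf v w) y.
  case: hO => _ hO.
  have [bx [[Obx [gx gxE]] _]] := hO x.
  have [by_ [[Oby [gy gyE]] _]] := hO y.
  rewrite -(Kf_inv gx x b0 mb) -(Kf_inv gy y b0 mb) gxE gyE !KV.
  by congr (_%:E); exact: hr.
transitivity (\int[mu]_s \int[gam s]_t (oint t v * bf v w (fst (s, t)) * m (s, t))).
  apply: eq_integral => s _; apply: eq_integral => t _.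
  rewrite /Delta_v /bf /= -/(oint t v) -/(oint s v).
  have /andP[h1 h2] := hv t.
  rewrite -[in RHS](@fineK _ (oint t v)); last by rewrite ge0_fin_numE// ltW.
  by rewrite EFinM; congr (_ * _); rewrite -muleA; congr (_ * _); exact: muleC.
rewrite (step v0 mv b0 mb (@measurable_fst _ _ S S) (fun h z => erefl) m0 mm minv2).
rewrite -(ext_eq mBg tBg cBg fBg mBd tBd cBd fBd HM (F := fun z => w z.2 * m z)); last 2 first.
- by move=> z; apply: mule_ge0.
- apply: emeasurable_funM => //.
  by apply: measurableT_comp => //; exact: measurable_snd.
transitivity (\int[mu]_s \int[gam s]_t (oint t v * bf v w (snd (s, t)) * m (s, t))); last first.
  by apply: eq_integral => s _; apply: eq_integral => t _; rewrite /= -[in RHS]E; congr (_ * _); exact: muleC.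
rewrite (step v0 mv b0 mb (@measurable_snd _ _ S S) (fun h z => erefl) m0 mm minv2).
by apply: eq_integral => s _; apply: eq_integral => t _; rewrite /= (Kc s t).
Qed.
End Main.
End Orbit.

Unset Implicit Arguments.

Theorem proposition6p7 (R : realType) (G : ptopologicalType)
  (mul : G -> G -> G) (inv : G -> G) (e : G)
  (lam : {measure set (borel_of G) -> \bar R})
  (d : measure_display) (S : measurableType d) (act : G -> S -> S) (O : set S)
  (mu nu : {measure set S -> \bar R}) (gam del : R.-ker S ~> S)
  (v w : S -> \bar R) (m : S * S -> \bar R) :
  lcsc_group mul inv e -> left_haar mul lam -> borel_space R S ->
  measurable_action mul e act -> proper_action lam act ->
  orbit_representatives act O ->
  sigma_finite setT mu -> sigma_finite setT nu ->
  invariant_measure act mu -> invariant_measure act nu ->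
  sigma_finite_kernel_on gam -> sigma_finite_kernel_on del ->
  invariant_kernel act gam -> invariant_kernel act del ->
  (forall C : set (S * S), measurable C ->
     (\int[mu]_s \int[gam s]_t (\1_C (s, t) : R)%:E
      = \int[nu]_t \int[del t]_s (\1_C (s, t) : R)%:E)%E) ->
  measurable_fun setT v -> (forall s, (0 <= v s)%E) ->
  measurable_fun setT w -> (forall s, (0 <= w s)%E) ->
  (forall s, (0 < orbit_int lam act s v < +oo)%E) ->
  (forall s, (0 < orbit_int lam act s w < +oo)%E) ->
  (forall b b', O b -> O b' ->
     fine (orbit_int lam act b w) / fine (orbit_int lam act b v)
     = fine (orbit_int lam act b' w) / fine (orbit_int lam act b' v)) ->
  measurable_fun setT m -> (forall p, (0 <= m p)%E) -> invariant_fun2 act m ->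
  (\int[mu]_s \int[gam s]_t (Delta_v lam act v s t * w s * m (s, t))
   = \int[nu]_t \int[del t]_s (w t * m (s, t)))%E.
Proof.
move=> [hg [cm ci _ _ _]] hL _ hA hP hO musf nusf muinv nuinv
  [Bg [mBg tBg cBg fBg]] [Bd [mBd tBd cBd fBd]] gaminv delinv HM
  mv v0 mw w0 hv hw hr mm m0 minv2.
have [[s0 _]|nS] := pselect (exists s : S, True); last first.
  have ST : [set: S] = set0.
    by apply/seteqP; split => // s _; apply: nS; exists s.
  by rewrite ST !integral_set0.
have [B [mB tB cB fB]] := hP.
pose Bl n := (fun g : borel_of G => act g s0) @^-1` B n.
have mBl n : measurable (Bl n).
  by rewrite -[X in measurable X]setTI; apply: (mact_l hA).
have tBl : trivIset setT Bl.
  by move=> i j _ _ [g [gi gj]]; apply: (tB i j) => //; exists (act g s0).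
have cBl : \bigcup_n Bl n = setT.
  apply/seteqP; split => // g _.
  have : [set: S] (act g s0) by [].
  by rewrite -cB => -[n _ Bn]; exists n.
have fBl n : (lam (Bl n) < +oo)%E by exact: fB.
exact: (main_core hg cm ci hL hA mBl tBl cBl fBl musf muinv gaminv
  mBg tBg cBg fBg mBd tBd cBd fBd HM hO mv v0 mw w0 hv hw hr mm m0 minv2).
Qed.
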